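(* Consider any correlated multi-secret sharing scheme $p_{M_{12}M_{23}M_{31}|XYZ}$ for a joint distribution $p_{XYZ}$ with full support on $\mathcal X\times\mathcal Y\times\mathcal Z$. Then (1) $H(M_{12})\ge\max\{\sup_{p_{X'Y'Z'}}(RI(X';Z')+H(X',Y'|Z')),\ \sup_{p_{X'Y'Z'}}(RI(Y';Z')+H(X',Y'|Z'))\}$, where the suprema are over distributions $p_{X'Y'Z'}$ for which the characteristic bipartite graph of $p_{X'Y'}$ is connected; (2) $H(M_{23})\ge\max\{\sup_{p_{X'Y'Z'}}(RI(X';Z')+H(Y',Z'|X')),\ \sup_{p_{X'Y'Z'}}(RI(X';Y')+H(Y',Z'|X'))\}$, where the suprema are over distributions $p_{X'Y'Z'}$ for which the characteristic bipartite graph of $p_{Y'Z'}$ is connected; (3) $H(M_{31})\ge\max\{\sup_{p_{X'Y'Z'}}(RI(Y';Z')+H(X',Z'|Y')),\ \sup_{p_{X'Y'Z'}}(RI(X';Y')+H(X',Z'|Y'))\}$, where the suprema are over distributions $p_{X'Y'Z'}$ for which the characteristic bipartite graph of $p_{X'Z'}$ is connected. The left-hand sides are computed under $p_{XYZ}$ and the scheme; the right-hand sides are computed under $p_{X'Y'Z'}$.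
   Context: A correlated multi-secret sharing (CMSS) scheme for a joint distribution $p_{XYZ}$ on finite sets is a conditional distribution $p_{M_{12}M_{23}M_{31}|XYZ}$ mapping secrets $(X,Y,Z)\sim p_{XYZ}$ probabilistically to shares $(M_{12},M_{23},M_{31})$ such that (correctness) $H(X|M_{12},M_{31})=H(Y|M_{12},M_{23})=H(Z|M_{23},M_{31})=0$ and (privacy) $I((M_{12},M_{31});(Y,Z)|X)=0$, $I((M_{12},M_{23});(X,Z)|Y)=0$, $I((M_{23},M_{31});(X,Y)|Z)=0$. The characteristic bipartite graph of a distribution $p_{UV}$ on $\mathcal U\times\mathcal V$ has vertex set $\mathcal U\cup\mathcal V$ with $u,v$ adjacent iff $p_{UV}(u,v)>0$. Residual information: $RI(U;V)=I(U;V)-H(U\sqcap V)$, where $U\sqcap V$ has maximum entropy among random variables of the form $f(U)=g(V)$ for deterministic $f,g$. *)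

(* Defs.v *)
From HB Require Import structures.
From mathcomp Require Import all_boot all_order all_algebra.
From mathcomp Require Import reals exp.
Set Implicit Arguments. Unset Strict Implicit. Unset Printing Implicit Defensive.
Import Order.TTheory GRing.Theory Num.Theory.
Local Open Scope ring_scope.

Definition is_dist (R : realType) (T : finType) (P : T -> R) : Prop :=
  (forall t, 0 <= P t) /\ \sum_(t : T) P t = 1.

(* Random variables are functions on the finite sample space [Om] under [P]. *)
Definition pmf (R : realType) (Om A : finType) (P : Om -> R) (f : Om -> A)
  (a : A) : R := \sum_(w : Om | f w == a) P w.

(* Shannon entropy (natural log; base is irrelevant for the inequalities). *)
Definition entropy (R : realType) (Om A : finType) (P : Om -> R) (f : Om -> A) : R :=
  - \sum_(a : A) pmf P f a * ln (pmf P f a).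

Definition rvpair (Om A B : finType) (f : Om -> A) (g : Om -> B) : Om -> A * B :=
  fun w => (f w, g w).

Definition condH (R : realType) (Om A B : finType) (P : Om -> R)
  (f : Om -> A) (g : Om -> B) : R :=
  entropy P (rvpair f g) - entropy P g.

Definition MI (R : realType) (Om A B : finType) (P : Om -> R)
  (f : Om -> A) (g : Om -> B) : R :=
  entropy P f + entropy P g - entropy P (rvpair f g).

Definition condMI (R : realType) (Om A B C : finType) (P : Om -> R)
  (f : Om -> A) (g : Om -> B) (h : Om -> C) : R :=
  condH P f h - condH P f (rvpair g h).

(* H(U ⊓ V): maximum entropy of a random variable of the form
   f(U) = g(V) (almost surely).  The codomain is taken to be the alphabet
   of U, which loses no generality since f(U) takes at most |U| values. *)
Definition common_entropy (R : realType) (Om A B : finType) (P : Om -> R)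
  (u : Om -> A) (v : Om -> B) : R :=
  \big[Num.max/0]_(fg : {ffun A -> A} * {ffun B -> A} |
        [forall w : Om, (0 < P w) ==> (fg.1 (u w) == fg.2 (v w))])
     entropy P (fun w => fg.1 (u w)).

Definition RI (R : realType) (Om A B : finType) (P : Om -> R)
  (u : Om -> A) (v : Om -> B) : R :=
  MI P u v - common_entropy P u v.

Definition char_graph (R : realType) (Om A B : finType) (P : Om -> R)
  (u : Om -> A) (v : Om -> B) : rel (A + B) :=
  fun s t => match s, t with
    | inl a, inr b => 0 < pmf P (rvpair u v) (a, b)
    | inr b, inl a => 0 < pmf P (rvpair u v) (a, b)
    | _, _ => false
    end.

Definition char_graph_connected (R : realType) (Om A B : finType) (P : Om -> R)
  (u : Om -> A) (v : Om -> B) : Prop :=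
  forall s t : A + B, connect (char_graph P u v) s t.

Definition sX (X Y Z : finType) (s : X * Y * Z) : X := s.1.1.
Definition sY (X Y Z : finType) (s : X * Y * Z) : Y := s.1.2.
Definition sZ (X Y Z : finType) (s : X * Y * Z) : Z := s.2.

Definition joint (R : realType) (X Y Z M12 M23 M31 : finType)
  (p : X * Y * Z -> R) (K : X * Y * Z -> M12 * M23 * M31 -> R)
  : (X * Y * Z) * (M12 * M23 * M31) -> R :=
  fun w => p w.1 * K w.1 w.2.

Section Coords.
Variables (X Y Z M12 M23 M31 : finType).
Definition jX (w : (X * Y * Z) * (M12 * M23 * M31)) : X := w.1.1.1.
Definition jY (w : (X * Y * Z) * (M12 * M23 * M31)) : Y := w.1.1.2.
Definition jZ (w : (X * Y * Z) * (M12 * M23 * M31)) : Z := w.1.2.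
Definition jM12 (w : (X * Y * Z) * (M12 * M23 * M31)) : M12 := w.2.1.1.
Definition jM23 (w : (X * Y * Z) * (M12 * M23 * M31)) : M23 := w.2.1.2.
Definition jM31 (w : (X * Y * Z) * (M12 * M23 * M31)) : M31 := w.2.2.
End Coords.

Definition is_CMSS (R : realType) (X Y Z M12 M23 M31 : finType)
  (p : X * Y * Z -> R) (K : X * Y * Z -> M12 * M23 * M31 -> R) : Prop :=
  let P := joint p K in
  let x := @jX X Y Z M12 M23 M31 in let y := @jY X Y Z M12 M23 M31 in
  let z := @jZ X Y Z M12 M23 M31 in let m12 := @jM12 X Y Z M12 M23 M31 in
  let m23 := @jM23 X Y Z M12 M23 M31 in let m31 := @jM31 X Y Z M12 M23 M31 in
  [/\ (forall s, is_dist (K s)),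
      condH P x (rvpair m12 m31) = 0,
      condH P y (rvpair m12 m23) = 0,
      condH P z (rvpair m23 m31) = 0 &
      [/\ condMI P (rvpair m12 m31) (rvpair y z) x = 0,
          condMI P (rvpair m12 m23) (rvpair x z) y = 0 &
          condMI P (rvpair m23 m31) (rvpair x y) z = 0]].

(* Main.v *)
Require Import Defs.
From HB Require Import structures.
From mathcomp Require Import all_boot all_order all_algebra.
From mathcomp Require Import reals exp.
From mathcomp Require Import ring lra.
Import Order.TTheory GRing.Theory Num.Theory.
Local Open Scope ring_scope.

Section Helpers.
Local Set Implicit Arguments.
Local Unset Strict Implicit.


Lemma sum_pmf (R : realType) (Om A : finType) (P : Om -> R) (f : Om -> A) (G : A -> R) :
  \sum_a pmf P f a * G a = \sum_w P w * G (f w).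
Proof.
rewrite (partition_big f predT) //=; apply: eq_bigr => a _.
rewrite /pmf mulr_suml; apply: eq_bigr => w /eqP <-; done.
Qed.

Lemma entropyE (R : realType) (Om A : finType) (P : Om -> R) (f : Om -> A) :
  entropy P f = - \sum_w P w * ln (pmf P f (f w)).
Proof. by rewrite /entropy sum_pmf. Qed.

Lemma pmf_ge (R : realType) (Om A : finType) (P : Om -> R) (f : Om -> A) w :
  (forall w, 0 <= P w) -> P w <= pmf P f (f w).
Proof.
move=> P0; rewrite /pmf (bigD1 w) //= lerDl sumr_ge0 // => ? _; exact: P0.
Qed.

Lemma pmf_ge0 (R : realType) (Om A : finType) (P : Om -> R) (f : Om -> A) a :
  (forall w, 0 <= P w) -> 0 <= pmf P f a.
Proof. by move=> P0; rewrite /pmf sumr_ge0. Qed.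

Definition refines (R : realType) (Om A B : finType) (P : Om -> R)
  (g : Om -> B) (f : Om -> A) :=
  forall w w', 0 < P w -> 0 < P w' -> g w = g w' -> f w = f w'.

Lemma ln_le1 (R : realType) (y : R) : 0 < y -> ln y <= y - 1.
Proof.
move=> y0; have := expR_ge1Dx (ln y); rewrite lnK ?posrE //; lra.
Qed.

Lemma ln_lt1 (R : realType) (y : R) : 0 < y -> y != 1 -> ln y < y - 1.
Proof.
move=> y0 y1; have l0 : ln y != 0 by rewrite ln_eq0.
have := expR_gt1Dx l0; rewrite lnK ?posrE //; lra.
Qed.

Lemma Hle (R : realType) (Om A B : finType) (P : Om -> R) (g : Om -> B) (f : Om -> A) :
  (forall w, 0 <= P w) -> refines P g f -> entropy P f <= entropy P g.
Proof.
move=> P0 rf; rewrite !entropyE lerN2 ler_sum // => w _.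
have [Pw|] := ltP 0 (P w); last first.
  move=> Pw; have -> : P w = 0 by apply/eqP; rewrite eq_le Pw P0.
  by rewrite !mul0r.
rewrite ler_pM2l //.
have g0 : 0 < pmf P g (g w) by apply: lt_le_trans Pw (pmf_ge _ _ P0).
have le : pmf P g (g w) <= pmf P f (f w).
  rewrite /pmf big_mkcond [X in _ <= X]big_mkcond /= ler_sum // => w' _.
  case: eqP => [e|_]; last by case: ifP => // _; exact: P0.
  have [Pw'|] := ltP 0 (P w'); last first.
    move=> Pw'; have -> : P w' = 0 by apply/eqP; rewrite eq_le Pw' P0.
    by case: ifP.
  by rewrite (rf w' w Pw' Pw e) eqxx.
by rewrite ler_ln ?posrE //; exact: lt_le_trans g0 le.
Qed.



Lemma pmf_mono (R : realType) (Om A B : finType) (P : Om -> R) (F : Om -> A) (h : Om -> B)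
  (phi : A -> B) v :
  (forall w, 0 <= P w) -> (forall w, h w = phi (F w)) -> pmf P F v <= pmf P h (phi v).
Proof.
move=> P0 e; rewrite /pmf big_mkcond [X in _ <= X]big_mkcond /= ler_sum // => w _.
case: eqP => [<-|_]; first by rewrite e eqxx.
by case: ifP => // _; exact: P0.
Qed.

Lemma pmf_marg (R : realType) (Om A C : finType) (P : Om -> R) (f : Om -> A) (h : Om -> C) c :
  \sum_a pmf P (rvpair f h) (a, c) = pmf P h c.
Proof.
rewrite /pmf (@partition_big _ _ _ _ (index_enum Om) _ (fun w => h w == c) f predT) //=.
apply: eq_bigr => a _; apply: eq_bigl => w.
by rewrite /rvpair xpair_eqE andbC.
Qed.

Lemma pmf_sum (R : realType) (Om A : finType) (P : Om -> R) (f : Om -> A) :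
  \sum_a pmf P f a = \sum_w P w.
Proof.
have := sum_pmf P f (fun _ => 1); rewrite (eq_bigr (fun a => pmf P f a)) ?mulr1 //.
by move=> ->; apply: eq_bigr => w _; rewrite mulr1.
by move=> *; rewrite mulr1.
Qed.

Lemma pmf_gt0 (R : realType) (Om A : finType) (P : Om -> R) (f : Om -> A) w :
  (forall w, 0 <= P w) -> 0 < P w -> 0 < pmf P f (f w).
Proof. by move=> P0 Pw; apply: lt_le_trans Pw (pmf_ge _ _ P0). Qed.

Lemma gibbs (R : realType) (Om A B C : finType) (P : Om -> R)
  (f : Om -> A) (g : Om -> B) (h : Om -> C) :
  (forall w, 0 <= P w) -> \sum_w P w = 1 ->
  0 <= condMI P f g h /\
  (condMI P f g h = 0 -> forall a b c,
     pmf P (rvpair f (rvpair g h)) (a, (b, c)) * pmf P h c =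
     pmf P (rvpair f h) (a, c) * pmf P (rvpair g h) (b, c)).
Proof.
move=> P0 P1.
set F := rvpair f (rvpair g h).
pose G (v : A * (B * C)) := pmf P (rvpair f h) (v.1, v.2.2) * pmf P (rvpair g h) v.2 /
  (pmf P F v * pmf P h v.2.2).
pose T (v : A * (B * C)) := pmf P (rvpair f h) (v.1, v.2.2) * pmf P (rvpair g h) v.2 /
  pmf P h v.2.2.
pose L w := ln (pmf P F (F w)) + ln (pmf P h (h w)) - ln (pmf P (rvpair f h) (f w, h w))
   - ln (pmf P (rvpair g h) (g w, h w)).
have DE : condMI P f g h = \sum_w P w * L w.
  rewrite /condMI /condH !entropyE.
  have -> : \sum_w P w * L w = \sum_w P w * ln (pmf P F (F w)) + \sum_w P w * ln (pmf P h (h w))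
     - \sum_w P w * ln (pmf P (rvpair f h) (rvpair f h w))
     - \sum_w P w * ln (pmf P (rvpair g h) (rvpair g h w)).
    rewrite -big_split -!sumrB /=; apply: eq_bigr => w _; rewrite /L; ring.
  rewrite /F; ring.
have Lge : forall w, 0 < P w -> 1 - G (F w) <= L w /\ (L w = 1 - G (F w) -> G (F w) = 1).
  move=> w Pw.
  have hF := pmf_gt0 F P0 Pw; have hh := pmf_gt0 h P0 Pw.
  have hfh := pmf_gt0 (rvpair f h) P0 Pw; have hgh := pmf_gt0 (rvpair g h) P0 Pw.
  have Gp : 0 < G (F w) by rewrite /G divr_gt0 // mulr_gt0.
  have LE : L w = - ln (G (F w)).
    rewrite /G /L ln_div ?posrE ?mulr_gt0 // !lnM ?posrE //; ring.
  rewrite LE; split; first by have := ln_le1 Gp; lra.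
  move=> e; apply/eqP; apply/negPn/negP => ne; have := ln_lt1 Gp ne; lra.
have gap : forall v, pmf P F v * G v <= T v /\ (pmf P F v != 0 -> pmf P F v * G v = T v).
  move=> [a [b c]]; rewrite /G /T /=.
  have Fh : pmf P F (a, (b, c)) <= pmf P h c.
    by apply: (pmf_mono (phi := fun v : A * (B * C) => v.2.2)).
  have [F0|Fn0] := eqVneq (pmf P F (a, (b, c))) 0.
    rewrite F0 mul0r; split; last by move=> /negP[].
    by rewrite divr_ge0 ?mulr_ge0 ?pmf_ge0.
  have Fp : 0 < pmf P F (a, (b, c)) by rewrite lt_def Fn0 pmf_ge0.
  have hp : 0 < pmf P h c by apply: lt_le_trans Fp Fh.
  have e : pmf P F (a, (b, c)) *
     (pmf P (rvpair f h) (a, c) * pmf P (rvpair g h) (b, c) / (pmf P F (a, (b, c)) * pmf P h c)) =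
     pmf P (rvpair f h) (a, c) * pmf P (rvpair g h) (b, c) / pmf P h c.
    by field; rewrite Fn0 /= gt_eqF.
  by rewrite e.
have sumT : \sum_v T v = 1.
  transitivity (\sum_c pmf P h c); last by rewrite pmf_sum.
  transitivity (\sum_(p : A * (B * C)) T (p.1, p.2)); first by apply: eq_bigr => -[].
  rewrite -(pair_bigA _ (fun a bc => T (a, bc))).
  transitivity (\sum_a \sum_b \sum_c T (a, (b, c))).
    apply: eq_bigr => a _.
    transitivity (\sum_(p : B * C) T (a, (p.1, p.2))); first by apply: eq_bigr => -[].
    by rewrite -(pair_bigA _ (fun b c => T (a, (b, c)))).
  rewrite (eq_bigr (fun a => \sum_c \sum_b T (a, (b, c)))); last by move=> a _; rewrite exchange_big.
  rewrite exchange_big; apply: eq_bigr => c _ /=.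
  rewrite /T /=.
  transitivity ((\sum_a pmf P (rvpair f h) (a, c)) * (\sum_b pmf P (rvpair g h) (b, c)) / pmf P h c).
    rewrite mulr_suml mulr_suml; apply: eq_bigr => a _.
    rewrite mulr_sumr mulr_suml; apply: eq_bigr => b _; ring.
  rewrite !pmf_marg; have [->|hn] := eqVneq (pmf P h c) 0; first by rewrite !mul0r.
  by field.
have termge : forall w, P w * (1 - G (F w)) <= P w * L w.
  move=> w; have [Pw|Pw] := ltP 0 (P w).
    by rewrite ler_pM2l //; case: (Lge w Pw).
  have -> : P w = 0 by apply/eqP; rewrite eq_le Pw P0.
  by rewrite !mul0r.
have SE : \sum_w P w * G (F w) = \sum_v pmf P F v * G v by rewrite sum_pmf.
have S1 : \sum_v pmf P F v * G v <= 1.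
  by rewrite -sumT ler_sum // => v _; case: (gap v).
have D1 : 1 - \sum_v pmf P F v * G v <= condMI P f g h.
  rewrite DE -SE -P1 -sumrB; apply: ler_sum => w _.
  by rewrite -[X in X - _]mulr1 -mulrBr; exact: termge.
split; first lra.
move=> D0 a b c.
have S1' : \sum_v pmf P F v * G v = 1 by lra.
have gap0 : forall v, T v - pmf P F v * G v = 0.
  move=> v; apply: (@psumr_eq0P _ _ predT (fun v => T v - pmf P F v * G v)) => //.
    by move=> u _; rewrite subr_ge0; case: (gap u).
  by rewrite sumrB sumT S1' subrr.
have term0 : forall w, P w * L w - P w * (1 - G (F w)) = 0.
  move=> w; apply: (@psumr_eq0P _ _ predT (fun w => P w * L w - P w * (1 - G (F w)))) => //.
    by move=> u _; rewrite subr_ge0.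
  rewrite sumrB -DE D0.
  have -> : \sum_w P w * (1 - G (F w)) = 1 - \sum_v pmf P F v * G v.
    by rewrite (eq_bigr (fun u => P u - P u * G (F u))) ?sumrB ?P1 ?SE // => u _; rewrite mulrBr mulr1.
  by rewrite S1' subrr subrr.
have Fh : pmf P F (a, (b, c)) <= pmf P h c.
  by apply: (pmf_mono (phi := fun v : A * (B * C) => v.2.2)).
have fhh : pmf P (rvpair f h) (a, c) <= pmf P h c.
  by apply: (pmf_mono (phi := fun v : A * C => v.2)).
have [F0|Fn0] := eqVneq (pmf P F (a, (b, c))) 0.
  have := gap0 (a, (b, c)); rewrite F0 mul0r subr0 /T /= => T0.
  rewrite mul0r.
  have [h0|hn] := eqVneq (pmf P h c) 0.
    have : pmf P (rvpair f h) (a, c) = 0.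
      by apply/eqP; rewrite eq_le pmf_ge0 // -h0 fhh.
    by move=> ->; rewrite mul0r.
  by move/eqP: T0; rewrite mulf_eq0 invr_eq0 (negbTE hn) orbF => /eqP ->.
have [w /andP [/eqP Fw Pw]] : exists w, (F w == (a, (b, c))) && (0 < P w).
  apply: psumr_neq0P; first by move=> *; exact: P0.
  by rewrite -/(pmf P F (a, (b, c))); apply/eqP.
have := term0 w; rewrite -mulrBr => /eqP; rewrite mulf_eq0 (gt_eqF Pw) /= subr_eq0 => /eqP e.
have := (Lge w Pw).2 e; rewrite Fw /G /= => G1.
have hp : pmf P h c != 0.
  by rewrite gt_eqF //; apply: lt_le_trans Fh; rewrite lt_def Fn0 pmf_ge0.
move: G1; rewrite -[X in _ = X -> _](mulr1 1) => G1.
have := G1; move/(congr1 (fun x => x * (pmf P F (a, (b, c)) * pmf P h c))).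
rewrite mulfVK ?mulf_neq0 // => ->; ring.
Qed.



Lemma ref_fun (R : realType) (Om A B : finType) (P : Om -> R) (g : Om -> B) (f : Om -> A)
  (phi : B -> A) : (forall w, f w = phi (g w)) -> refines P g f.
Proof. by move=> e w w' _ _ E; rewrite !e E. Qed.

Lemma ref_trans (R : realType) (Om A B C : finType) (P : Om -> R) (h : Om -> C) (g : Om -> B)
  (f : Om -> A) : refines P g f -> refines P h g -> refines P h f.
Proof. by move=> r1 r2 w w' Pw Pw' e; apply: r1 => //; apply: r2. Qed.

Lemma ref_pair (R : realType) (Om A B C : finType) (P : Om -> R) (h : Om -> C) (f : Om -> A)
  (g : Om -> B) : refines P h f -> refines P h g -> refines P h (rvpair f g).
Proof. by move=> r1 r2 w w' Pw Pw' e; rewrite /rvpair (r1 w w') ?(r2 w w'). Qed.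

Lemma Heq (R : realType) (Om A B : finType) (P : Om -> R) (g : Om -> B) (f : Om -> A) :
  (forall w, 0 <= P w) -> refines P g f -> refines P f g -> entropy P f = entropy P g.
Proof. by move=> P0 r1 r2; apply/eqP; rewrite eq_le !Hle. Qed.

Lemma H_const (R : realType) (Om : finType) (P : Om -> R) :
  \sum_w P w = 1 -> entropy P (fun _ : Om => tt) = 0.
Proof.
move=> P1; rewrite entropyE.
have -> : pmf P (fun _ : Om => tt) tt = 1 by rewrite /pmf (eq_bigl predT) // => w; rewrite eqxx.
by rewrite ln1 big1 ?oppr0 // => w _; rewrite mulr0.
Qed.

Lemma fact_CMI0 (R : realType) (Om A B C : finType) (P : Om -> R)
  (f : Om -> A) (g : Om -> B) (h : Om -> C) :
  (forall w, 0 <= P w) ->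
  (forall a b c,
     pmf P (rvpair f (rvpair g h)) (a, (b, c)) * pmf P h c =
     pmf P (rvpair f h) (a, c) * pmf P (rvpair g h) (b, c)) ->
  condMI P f g h = 0.
Proof.
move=> P0 fact.
set F := rvpair f (rvpair g h).
pose L w := ln (pmf P F (F w)) + ln (pmf P h (h w)) - ln (pmf P (rvpair f h) (f w, h w))
   - ln (pmf P (rvpair g h) (g w, h w)).
have DE : condMI P f g h = \sum_w P w * L w.
  rewrite /condMI /condH !entropyE.
  have -> : \sum_w P w * L w = \sum_w P w * ln (pmf P F (F w)) + \sum_w P w * ln (pmf P h (h w))
     - \sum_w P w * ln (pmf P (rvpair f h) (rvpair f h w))
     - \sum_w P w * ln (pmf P (rvpair g h) (rvpair g h w)).
    rewrite -big_split -!sumrB /=; apply: eq_bigr => w _; rewrite /L; ring.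
  rewrite /F; ring.
rewrite DE big1 // => w _.
have [Pw|Pw] := ltP 0 (P w); last first.
  have -> : P w = 0 by apply/eqP; rewrite eq_le Pw P0.
  by rewrite mul0r.
have hF := pmf_gt0 F P0 Pw; have hh := pmf_gt0 h P0 Pw.
have hfh := pmf_gt0 (rvpair f h) P0 Pw; have hgh := pmf_gt0 (rvpair g h) P0 Pw.
have -> : L w = ln (pmf P F (F w) * pmf P h (h w)) -
                ln (pmf P (rvpair f h) (f w, h w) * pmf P (rvpair g h) (g w, h w)).
  by rewrite !lnM ?posrE // /L; ring.
by rewrite /F /= fact subrr mulr0.
Qed.

Lemma condH0_det (R : realType) (Om A B : finType) (P : Om -> R) (f : Om -> A) (g : Om -> B) :
  (forall w, 0 <= P w) -> \sum_w P w = 1 -> condH P f g = 0 -> refines P g f.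
Proof.
move=> P0 P1 H0.
have e : condMI P f f g = 0.
  rewrite /condMI H0 /condH.
  rewrite (@Heq _ _ _ _ P (rvpair f g) (rvpair f (rvpair f g))) // ?subrr ?subr0 //.
    by apply: (ref_fun (phi := fun v => (v.1, v))).
  by apply: (ref_fun (phi := fun v => v.2)).
have := (gibbs f f g P0 P1).2 e => fact.
move=> w w' Pw Pw' ew; apply/eqP/negP => /negP ne.
have := fact (f w) (f w') (g w).
have -> : pmf P (rvpair f (rvpair f g)) (f w, (f w', g w)) = 0.
  rewrite /pmf big_pred0 // => u; apply/negP => /eqP [e1 e2 _].
  by move: ne; rewrite -e1 -e2 eqxx.
rewrite mul0r => /esym/eqP; rewrite mulf_eq0 => /orP [].
  by rewrite gt_eqF //; exact: (pmf_gt0 (rvpair f g) P0 Pw).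
by rewrite ew gt_eqF //; exact: (pmf_gt0 (rvpair f g) P0 Pw').
Qed.

Lemma HeqS (R : realType) (Om A B : finType) (P : Om -> R) (f : Om -> A) (g : Om -> B) :
  (forall w, 0 <= P w) -> refines P f g -> refines P g f -> entropy P f = entropy P g.
Proof. by move=> P0 r1 r2; apply: Heq. Qed.



Lemma key (R : realType) (Om A T V TV U Zt S : finType) (Q : Om -> R)
  (a : Om -> A) (t : Om -> T) (v : Om -> V) (tv : Om -> TV) (u : Om -> U)
  (z : Om -> Zt) (s : Om -> S) :
  (forall w, 0 <= Q w) -> \sum_w Q w = 1 ->
  refines Q (rvpair a t) u ->
  refines Q tv z ->
  refines Q (rvpair a tv) s ->
  refines Q tv t -> refines Q tv v -> refines Q (rvpair v t) tv ->
  condMI Q s tv z = 0 ->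
  condMI Q u t (fun _ => tt) = 0 ->
  MI Q u z + condH Q s z <= entropy Q a.
Proof.
move=> Q0 Q1 ru rz rs rt rv rtv p1 p2.
have Hc := H_const Q1.
have e1 := p1; rewrite /condMI /condH in e1.
have e2 : entropy Q (rvpair tv z) = entropy Q tv.
  apply: HeqS => //; first by apply: (ref_fun (phi := fun x => x.1)).
  by apply: ref_pair => //; apply: (ref_fun (phi := id)).
have e3 : entropy Q (rvpair s (rvpair tv z)) = entropy Q (rvpair s tv).
  apply: HeqS => //.
    by apply: ref_pair; [apply: (ref_fun (phi := fun x => x.1)) | apply: (ref_fun (phi := fun x => x.2.1))].
  apply: ref_pair; first by apply: (ref_fun (phi := fun x => x.1)).
  apply: ref_pair; first by apply: (ref_fun (phi := fun x => x.2)).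
  by apply: ref_trans rz _; apply: (ref_fun (phi := fun x => x.2)).
have e4 : entropy Q (rvpair s tv) <= entropy Q (rvpair a tv).
  apply: Hle => //; apply: ref_pair => //.
  by apply: (ref_fun (phi := fun x => x.2)).
have e5 := (gibbs u tv z Q0 Q1).1; rewrite /condMI /condH in e5.
have e6 : entropy Q (rvpair u (rvpair tv z)) = entropy Q (rvpair u tv).
  apply: HeqS => //.
    by apply: ref_pair; [apply: (ref_fun (phi := fun x => x.1)) | apply: (ref_fun (phi := fun x => x.2.1))].
  apply: ref_pair; first by apply: (ref_fun (phi := fun x => x.1)).
  apply: ref_pair; first by apply: (ref_fun (phi := fun x => x.2)).
  by apply: ref_trans rz _; apply: (ref_fun (phi := fun x => x.2)).
have e7 := p2; rewrite /condMI /condH in e7.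
have c1 : forall (B : finType) (f : Om -> B), entropy Q (rvpair f (fun _ => tt)) = entropy Q f.
  move=> B f; apply: HeqS => //; first by apply: (ref_fun (phi := fun x => x.1)).
  by apply: (ref_fun (phi := fun x => (x, tt))).
have c2 : forall (B D : finType) (f : Om -> B) (g : Om -> D),
    entropy Q (rvpair f (rvpair g (fun _ => tt))) = entropy Q (rvpair f g).
  move=> B D f g; apply: HeqS => //; first by apply: (ref_fun (phi := fun x => (x.1, x.2.1))).
  by apply: (ref_fun (phi := fun x => (x.1, (x.2, tt)))).
rewrite !c1 !c2 Hc in e7.
have e8 := (gibbs a v (rvpair u t) Q0 Q1).1; rewrite /condMI /condH in e8.
have e8a : entropy Q (rvpair a (rvpair u t)) = entropy Q (rvpair a t).
  apply: HeqS => //; first by apply: (ref_fun (phi := fun x => (x.1, x.2.2))).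
  by apply: ref_pair; [apply: (ref_fun (phi := fun x => x.1)) | apply: ref_pair => //; apply: (ref_fun (phi := fun x => x.2))].
have e8b : entropy Q (rvpair a (rvpair v (rvpair u t))) = entropy Q (rvpair a tv).
  apply: HeqS => //.
    apply: ref_pair; first by apply: (ref_fun (phi := fun x => x.1)).
    by apply: ref_trans rtv _; apply: (ref_fun (phi := fun x => (x.2.1, x.2.2.2))).
  apply: ref_pair; first by apply: (ref_fun (phi := fun x => x.1)).
  have rtv2 : refines Q (rvpair a tv) tv by apply: (ref_fun (phi := fun x => x.2)).
  have rat : refines Q (rvpair a tv) (rvpair a t).
    apply: ref_pair; first by apply: (ref_fun (phi := fun x => x.1)).
    exact: ref_trans rt rtv2.
  apply: ref_pair; first exact: ref_trans rv rtv2.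
  by apply: ref_pair; [exact: ref_trans ru rat | exact: ref_trans rt rtv2].
have e8c : entropy Q (rvpair v (rvpair u t)) = entropy Q (rvpair u tv).
  apply: HeqS => //.
    apply: ref_pair; first by apply: (ref_fun (phi := fun x => x.2.1)).
    by apply: ref_trans rtv _; apply: (ref_fun (phi := fun x => (x.1, x.2.2))).
  apply: ref_pair; first by apply: ref_trans rv _; apply: (ref_fun (phi := fun x => x.2)).
  apply: ref_pair; first by apply: (ref_fun (phi := fun x => x.1)).
  by apply: ref_trans rt _; apply: (ref_fun (phi := fun x => x.2)).
rewrite e8a e8b e8c in e8.
have e9 := (gibbs a t (fun _ => tt) Q0 Q1).1; rewrite /condMI /condH !c1 !c2 Hc in e9.
rewrite /MI /condH.
rewrite e2 e3 in e1; rewrite e2 e6 in e5.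
lra.
Qed.



Definition jnt (R : realType) (S M : finType) (p : S -> R) (K : S -> M -> R) : S * M -> R :=
  fun w => p w.1 * K w.1 w.2.

Definition kmarg (R : realType) (S M B : finType) (K : S -> M -> R) (fs : M -> B) s b :=
  \sum_(m | fs m == b) K s m.

Lemma kmarg_tt (R : realType) (S M : finType) (K : S -> M -> R) s :
  is_dist (K s) -> kmarg K (fun _ => tt) s tt = 1.
Proof. by case=> _ K1; rewrite /kmarg (eq_bigl predT) // => m; rewrite eqxx. Qed.

Lemma jnt_dist (R : realType) (S M : finType) (p : S -> R) (K : S -> M -> R) :
  is_dist p -> (forall s, is_dist (K s)) ->
  (forall w, 0 <= jnt p K w) /\ \sum_w jnt p K w = 1.
Proof.
move=> [p0 p1] Kd; split.
  by move=> w; rewrite /jnt mulr_ge0 //; case: (Kd w.1).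
rewrite -p1.
transitivity (\sum_(w : S * M) (fun s m => p s * K s m) w.1 w.2); first by [].
rewrite -(pair_bigA _ (fun s m => p s * K s m)) /=.
by apply: eq_bigr => s _; rewrite -mulr_sumr; case: (Kd s) => _ ->; rewrite mulr1.
Qed.

Lemma pmf_jnt (R : realType) (S M V A B : finType) (p : S -> R) (K : S -> M -> R)
  (F : S * M -> V) v (alpha : S -> A) a (beta : M -> B) b :
  (forall s m, (F (s, m) == v) = (alpha s == a) && (beta m == b)) ->
  pmf (jnt p K) F v = \sum_(s | alpha s == a) p s * kmarg K beta s b.
Proof.
move=> e; rewrite /pmf big_mkcond.
transitivity (\sum_(w : S * M) (fun s m => if F (s, m) == v then p s * K s m else 0) w.1 w.2).
  by apply: eq_bigr => -[s m] _.
rewrite -(pair_bigA _ (fun s m => if F (s, m) == v then p s * K s m else 0)) /= [RHS]big_mkcond; apply: eq_bigr => s _.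
case: ifP => ha.
  rewrite /kmarg mulr_sumr [RHS]big_mkcond; apply: eq_bigr => m _.
  by rewrite e ha /=; case: ifP.
by rewrite big1 // => m _; rewrite e ha.
Qed.

Lemma kmarg_coarse (R : realType) (S M B C : finType) (K : S -> M -> R) (fs : M -> B)
  (phi : B -> C) s c :
  kmarg K (fun m => phi (fs m)) s c = \sum_(b | phi b == c) kmarg K fs s b.
Proof.
rewrite /kmarg (@partition_big _ _ _ _ (index_enum M) _ (fun m => phi (fs m) == c) fs
  (fun b => phi b == c)) //=.
apply: eq_bigr => b /eqP hb; apply: eq_bigl => m.
by apply/andP/eqP => [[_ /eqP] //| e]; rewrite e hb.
Qed.

Lemma priv_ker (R : realType) (S M B G H : finType) (p : S -> R) (K : S -> M -> R)
  (fs : M -> B) (g : S -> G) (h : S -> H) :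
  is_dist p -> (forall s, 0 < p s) -> (forall s, is_dist (K s)) ->
  (forall s s', g s = g s' -> h s = h s' -> s = s') ->
  condMI (jnt p K) (fun w => fs w.2) (fun w => g w.1) (fun w => h w.1) = 0 ->
  forall s s', h s = h s' -> forall b, kmarg K fs s b = kmarg K fs s' b.
Proof.
move=> pd ppos Kd inj H0.
have [P0 P1] := jnt_dist pd Kd.
have fact := (gibbs _ _ _ P0 P1).2 H0.
pose ph c := \sum_(x | h x == c) p x * kmarg K (fun _ => tt) x tt.
pose N b c := \sum_(x | h x == c) p x * kmarg K fs x b.
have eq1 : forall s b, kmarg K fs s b * ph (h s) = N b (h s).
  move=> s b; have := fact b (g s) (h s).
  rewrite (@pmf_jnt _ _ _ _ _ _ _ _ _ _ id s fs b); last first.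
    move=> x m; rewrite /rvpair /= !xpair_eqE andbC; congr (_ && _).
    by apply/andP/eqP => [[/eqP e1 /eqP e2]|->]; [exact: inj|rewrite !eqxx].
  rewrite (@pmf_jnt _ _ _ _ _ _ _ _ _ _ h (h s) (fun _ => tt) tt); last first.
    by move=> x m; rewrite eqxx andbT.
  rewrite (@pmf_jnt _ _ _ _ _ _ _ _ _ _ h (h s) fs b); last first.
    by move=> x m; rewrite /rvpair xpair_eqE andbC.
  rewrite (@pmf_jnt _ _ _ _ _ _ _ _ _ _ id s (fun _ => tt) tt); last first.
    move=> x m; rewrite /rvpair /= xpair_eqE eqxx andbT.
    by apply/andP/eqP => [[/eqP e1 /eqP e2]|->]; [exact: inj|rewrite !eqxx].
  rewrite !big_pred1_eq kmarg_tt // -/(ph (h s)) -/(N b (h s)) => e.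
  have pn : p s != 0 by rewrite gt_eqF.
  by apply: (mulfI pn); rewrite mulrA e; ring.
move=> s s' hs b.
have php : 0 < ph (h s).
  rewrite /ph (bigD1 s) //= kmarg_tt // mulr1.
  have := ppos s.
  have : 0 <= \sum_(i | (h i == h s) && (i != s)) p i * kmarg K (fun _ => tt) i tt.
    by apply: sumr_ge0 => x _; rewrite kmarg_tt // mulr1; case: pd.
  lra.
apply: (mulIf (negbT (gt_eqF php))); rewrite /= eq1 hs eq1 //.
Qed.

Lemma corr_ker (R : realType) (S M B H : finType) (p : S -> R) (K : S -> M -> R)
  (fs : M -> B) (h : S -> H) :
  is_dist p -> (forall s, 0 < p s) -> (forall s, is_dist (K s)) ->
  condH (jnt p K) (fun w => h w.1) (fun w => fs w.2) = 0 ->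
  forall s s' m m', 0 < K s m -> 0 < K s' m' -> fs m = fs m' -> h s = h s'.
Proof.
move=> pd ppos Kd H0 s s' m m' Km Km' e.
have [P0 P1] := jnt_dist pd Kd.
have rf := condH0_det P0 P1 H0.
by apply: (rf (s, m) (s', m')) => //; rewrite /jnt mulr_gt0.
Qed.

Lemma Q_indep (R : realType) (S M B G H : finType) (q : S -> R) (K : S -> M -> R)
  (fs : M -> B) (g : S -> G) (h : S -> H) :
  is_dist q -> (forall s, is_dist (K s)) ->
  (forall s s', h s = h s' -> forall b, kmarg K fs s b = kmarg K fs s' b) ->
  condMI (jnt q K) (fun w => g w.1) (fun w => fs w.2) (fun w => h w.1) = 0.
Proof.
move=> qd Kd kh.
have [P0 P1] := jnt_dist qd Kd.
apply: fact_CMI0 => // a b c.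
rewrite (@pmf_jnt _ _ _ _ _ _ _ _ _ _ (fun x => (g x, h x)) (a, c) fs b); last first.
  by move=> x m; rewrite /rvpair /= !xpair_eqE; case: (g x == a); case: (h x == c);
     case: (fs m == b).
rewrite (@pmf_jnt _ _ _ _ _ _ _ _ _ _ h c (fun _ => tt) tt); last first.
  by move=> x m; rewrite eqxx andbT.
rewrite (@pmf_jnt _ _ _ _ _ _ _ _ _ _ (fun x => (g x, h x)) (a, c) (fun _ => tt) tt); last first.
  by move=> x m; rewrite eqxx andbT.
rewrite (@pmf_jnt _ _ _ _ _ _ _ _ _ _ h c fs b); last first.
  by move=> x m; rewrite /rvpair xpair_eqE andbC.
case: (pickP (fun x => h x == c)) => [x0 /eqP hx0|none].
  have k1 : forall x, h x == c -> kmarg K fs x b = kmarg K fs x0 b.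
    by move=> x /eqP hx; apply: kh; rewrite hx hx0.
  rewrite (eq_bigr (fun x => q x * kmarg K fs x0 b)); last first.
    by move=> x /eqP [_ hx]; rewrite k1 // hx.
  rewrite [X in _ = _ * X](eq_bigr (fun x => q x * kmarg K fs x0 b)); last first.
    by move=> x hx; rewrite k1.
  rewrite [X in _ * X = _](eq_bigr (fun x => q x)); last by move=> x _; rewrite kmarg_tt // mulr1.
  rewrite [X in _ = X * _](eq_bigr (fun x => q x)); last by move=> x _; rewrite kmarg_tt // mulr1.
  rewrite -!mulr_suml; ring.
rewrite [X in _ * X = _]big_pred0 // [X in _ = _ * X]big_pred0 //.
by rewrite !mulr0.
Qed.

Lemma ent_fst (R : realType) (S M A : finType) (q : S -> R) (K : S -> M -> R) (phi : S -> A) :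
  (forall s, is_dist (K s)) -> entropy (jnt q K) (fun w => phi w.1) = entropy q phi.
Proof.
move=> Kd; rewrite /entropy; apply: congr1; apply: eq_bigr => a _.
have -> : pmf (jnt q K) (fun w => phi w.1) a = pmf q phi a; last by [].
rewrite (@pmf_jnt _ _ _ _ _ _ _ _ _ _ phi a (fun _ => tt) tt); last first.
  by move=> x m; rewrite eqxx andbT.
by rewrite /pmf; apply: eq_bigr => x _; rewrite kmarg_tt // mulr1.
Qed.

Lemma ent_snd (R : realType) (S M B : finType) (p q : S -> R) (K : S -> M -> R) (fs : M -> B) :
  is_dist p -> is_dist q -> (forall s s' b, kmarg K fs s b = kmarg K fs s' b) ->
  entropy (jnt p K) (fun w => fs w.2) = entropy (jnt q K) (fun w => fs w.2).
Proof.
move=> [_ p1] [_ q1] kc.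
have [x0 _|none] := pickP (@predT S); last first.
  by move: p1; rewrite big_pred0 // => /eqP; rewrite eq_sym oner_eq0.
have E : forall r : S -> R, \sum_s r s = 1 -> forall b,
    pmf (jnt r K) (fun w => fs w.2) b = kmarg K fs x0 b.
  move=> r r1 b; rewrite (@pmf_jnt _ _ _ _ _ _ _ _ _ _ (fun _ => tt) tt fs b) //.
  rewrite (eq_bigr (fun s => r s * kmarg K fs x0 b)) => [|s _]; last by rewrite (kc s x0).
  rewrite -mulr_suml (eq_bigl predT) ?r1 ?mul1r // => x; by rewrite eqxx.
by rewrite /entropy; apply: congr1; apply: eq_bigr => b _; rewrite !E.
Qed.



Lemma ref_Q (R : realType) (S M B H : finType) (q : S -> R) (K : S -> M -> R)
  (fs : M -> B) (h : S -> H) :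
  is_dist q ->
  (forall s s' m m', 0 < K s m -> 0 < K s' m' -> fs m = fs m' -> h s = h s') ->
  refines (jnt q K) (fun w => fs w.2) (fun w => h w.1).
Proof.
move=> [q0 _] ck [s m] [s' m'] /= Pw Pw' e.
have pos : forall s m, 0 < jnt q K (s, m) -> 0 < K s m.
  move=> s0 m0; rewrite /jnt /=; case: (ltP 0 (K s0 m0)) => // Km Pl.
  have : q s0 * K s0 m0 <= 0 by rewrite mulr_ge0_le0.
  by rewrite leNgt Pl.
by apply: (ck s s' m m'); rewrite ?pos.
Qed.

Lemma dep_coarse (R : realType) (S M B C H : finType) (K : S -> M -> R) (fs : M -> B)
  (phi : B -> C) (h : S -> H) :
  (forall s s', h s = h s' -> forall b, kmarg K fs s b = kmarg K fs s' b) ->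
  forall s s', h s = h s' -> forall c,
    kmarg K (fun m => phi (fs m)) s c = kmarg K (fun m => phi (fs m)) s' c.
Proof.
by move=> k s s' e c; rewrite !kmarg_coarse; apply: eq_bigr => b _; apply: k.
Qed.

Lemma const_mid (R : realType) (S B H1 H2 : finType) (kk : S -> B -> R)
  (h1 : S -> H1) (h2 : S -> H2) :
  (forall s s', h1 s = h1 s' -> forall b, kk s b = kk s' b) ->
  (forall s s', h2 s = h2 s' -> forall b, kk s b = kk s' b) ->
  (forall s s', exists m, h1 m = h1 s /\ h2 m = h2 s') ->
  forall s s' b, kk s b = kk s' b.
Proof.
move=> k1 k2 mid s s' b; have [m [e1 e2]] := mid s s'.
by rewrite -(k1 _ _ e1) (k2 _ _ e2).
Qed.

Lemma RI_le (R : realType) (Om A B : finType) (P : Om -> R) (u : Om -> A) (v : Om -> B) :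
  RI P u v <= MI P u v.
Proof.
rewrite /RI /common_entropy gerBl.
apply: (big_rec (fun x => 0 <= x)) => // i x _ x0.
by rewrite le_max x0 orbT.
Qed.

Lemma MI_sym (R : realType) (Om A B : finType) (P : Om -> R) (u : Om -> A) (v : Om -> B) :
  (forall w, 0 <= P w) -> MI P u v = MI P v u.
Proof.
move=> P0; rewrite /MI (@HeqS _ _ _ _ P (rvpair u v) (rvpair v u)) //.
- ring.
- by apply: (ref_fun (phi := fun x => (x.2, x.1))).
- by apply: (ref_fun (phi := fun x => (x.2, x.1))).
Qed.

Lemma MI_fst (R : realType) (S M A B : finType) (q : S -> R) (K : S -> M -> R)
  (f : S -> A) (g : S -> B) :
  (forall s, is_dist (K s)) ->
  MI (jnt q K) (fun w => f w.1) (fun w => g w.1) = MI q f g.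
Proof.
move=> Kd; rewrite /MI -(ent_fst _ f Kd) -(ent_fst _ g Kd) -(ent_fst _ (rvpair f g) Kd).
by [].
Qed.

Lemma condH_fst (R : realType) (S M A B : finType) (q : S -> R) (K : S -> M -> R)
  (f : S -> A) (g : S -> B) :
  (forall s, is_dist (K s)) ->
  condH (jnt q K) (fun w => f w.1) (fun w => g w.1) = condH q f g.
Proof.
move=> Kd; rewrite /condH -(ent_fst _ g Kd) -(ent_fst _ (rvpair f g) Kd).
by [].
Qed.

End Helpers.

Theorem theorem11 (R : realType) (X Y Z M12 M23 M31 : finType)
  (p : X * Y * Z -> R) (K : X * Y * Z -> M12 * M23 * M31 -> R) :
  is_dist p -> (forall s, 0 < p s) -> is_CMSS p K ->
  let P := joint p K in
  (* (1) *)
  (forall q : X * Y * Z -> R, is_dist q ->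
     char_graph_connected q (@sX X Y Z) (@sY X Y Z) ->
     RI q (@sX X Y Z) (@sZ X Y Z) + condH q (rvpair (@sX X Y Z) (@sY X Y Z)) (@sZ X Y Z)
       <= entropy P (@jM12 X Y Z M12 M23 M31) /\
     RI q (@sY X Y Z) (@sZ X Y Z) + condH q (rvpair (@sX X Y Z) (@sY X Y Z)) (@sZ X Y Z)
       <= entropy P (@jM12 X Y Z M12 M23 M31)) /\
  (* (2) *)
  (forall q : X * Y * Z -> R, is_dist q ->
     char_graph_connected q (@sY X Y Z) (@sZ X Y Z) ->
     RI q (@sX X Y Z) (@sZ X Y Z) + condH q (rvpair (@sY X Y Z) (@sZ X Y Z)) (@sX X Y Z)
       <= entropy P (@jM23 X Y Z M12 M23 M31) /\
     RI q (@sX X Y Z) (@sY X Y Z) + condH q (rvpair (@sY X Y Z) (@sZ X Y Z)) (@sX X Y Z)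
       <= entropy P (@jM23 X Y Z M12 M23 M31)) /\
  (* (3) *)
  (forall q : X * Y * Z -> R, is_dist q ->
     char_graph_connected q (@sX X Y Z) (@sZ X Y Z) ->
     RI q (@sY X Y Z) (@sZ X Y Z) + condH q (rvpair (@sX X Y Z) (@sZ X Y Z)) (@sY X Y Z)
       <= entropy P (@jM31 X Y Z M12 M23 M31) /\
     RI q (@sX X Y Z) (@sY X Y Z) + condH q (rvpair (@sX X Y Z) (@sZ X Y Z)) (@sY X Y Z)
       <= entropy P (@jM31 X Y Z M12 M23 M31)).
Proof.
move=> pd ppos CM P.
case: CM => Kd c1 c2 c3 [pr1 pr2 pr3].
pose S := (X * Y * Z)%type; pose M := (M12 * M23 * M31)%type.
have inj1 : forall s s' : S, (s.1.2, s.2) = (s'.1.2, s'.2) -> s.1.1 = s'.1.1 -> s = s'.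
  by move=> [[? ?] ?] [[? ?] ?] /= [-> ->] ->.
have inj2 : forall s s' : S, (s.1.1, s.2) = (s'.1.1, s'.2) -> s.1.2 = s'.1.2 -> s = s'.
  by move=> [[? ?] ?] [[? ?] ?] /= [-> ->] ->.
have inj3 : forall s s' : S, (s.1.1, s.1.2) = (s'.1.1, s'.1.2) -> s.2 = s'.2 -> s = s'.
  by move=> [[? ?] ?] [[? ?] ?] /= [-> ->] ->.
have k1 := @priv_ker _ _ _ _ _ _ p K (fun m : M => (m.1.1, m.2)) (fun s : S => (s.1.2, s.2))
  (fun s : S => s.1.1) pd ppos Kd inj1 pr1.
have k2 := @priv_ker _ _ _ _ _ _ p K (fun m : M => (m.1.1, m.1.2)) (fun s : S => (s.1.1, s.2))
  (fun s : S => s.1.2) pd ppos Kd inj2 pr2.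
have k3 := @priv_ker _ _ _ _ _ _ p K (fun m : M => (m.1.2, m.2)) (fun s : S => (s.1.1, s.1.2))
  (fun s : S => s.2) pd ppos Kd inj3 pr3.
have k12c : forall s s' b, kmarg K (fun m : M => m.1.1) s b = kmarg K (fun m : M => m.1.1) s' b.
  apply: (const_mid (h1 := fun s : S => s.1.1) (h2 := fun s : S => s.1.2)).
  - exact: (@dep_coarse _ _ _ _ _ _ _ _ fst _ k1).
  - exact: (@dep_coarse _ _ _ _ _ _ _ _ fst _ k2).
  - by move=> s s'; exists ((s.1.1, s'.1.2), s.2).
have k23c : forall s s' b, kmarg K (fun m : M => m.1.2) s b = kmarg K (fun m : M => m.1.2) s' b.
  apply: (const_mid (h1 := fun s : S => s.1.2) (h2 := fun s : S => s.2)).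
  - exact: (@dep_coarse _ _ _ _ _ _ _ _ snd _ k2).
  - exact: (@dep_coarse _ _ _ _ _ _ _ _ fst _ k3).
  - by move=> s s'; exists (s.1, s'.2).
have k31c : forall s s' b, kmarg K (fun m : M => m.2) s b = kmarg K (fun m : M => m.2) s' b.
  apply: (const_mid (h1 := fun s : S => s.1.1) (h2 := fun s : S => s.2)).
  - exact: (@dep_coarse _ _ _ _ _ _ _ _ snd _ k1).
  - exact: (@dep_coarse _ _ _ _ _ _ _ _ snd _ k3).
  - by move=> s s'; exists (s.1, s'.2).
have cr1 := @corr_ker _ _ _ _ _ p K (fun m : M => (m.1.1, m.2)) (fun s : S => s.1.1) pd ppos Kd c1.
have cr2 := @corr_ker _ _ _ _ _ p K (fun m : M => (m.1.1, m.1.2)) (fun s : S => s.1.2) pd ppos Kd c2.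
have cr3 := @corr_ker _ _ _ _ _ p K (fun m : M => (m.1.2, m.2)) (fun s : S => s.2) pd ppos Kd c3.
pose jx := @jX X Y Z M12 M23 M31; pose jy := @jY X Y Z M12 M23 M31; pose jz := @jZ X Y Z M12 M23 M31.
pose a12 := @jM12 X Y Z M12 M23 M31; pose a23 := @jM23 X Y Z M12 M23 M31; pose a31 := @jM31 X Y Z M12 M23 M31.
split; [|split] => q qd _.
- have [Q0 Q1] := jnt_dist qd Kd.
  have R1 : refines (jnt q K) (rvpair a12 a31) jx := ref_Q qd cr1.
  have R2 : refines (jnt q K) (rvpair a12 a23) jy := ref_Q qd cr2.
  have R3 : refines (jnt q K) (rvpair a23 a31) jz := ref_Q qd cr3.
  have I1 : condMI (jnt q K) (rvpair jy jz) (rvpair a12 a31) jx = 0 :=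
    @Q_indep _ _ _ _ _ _ q K (fun m : M => (m.1.1, m.2)) (fun s : S => (s.1.2, s.2)) (fun s : S => s.1.1) qd Kd k1.
  have I2 : condMI (jnt q K) (rvpair jx jz) (rvpair a12 a23) jy = 0 :=
    @Q_indep _ _ _ _ _ _ q K (fun m : M => (m.1.1, m.1.2)) (fun s : S => (s.1.1, s.2)) (fun s : S => s.1.2) qd Kd k2.
  have I3 : condMI (jnt q K) (rvpair jx jy) (rvpair a23 a31) jz = 0 :=
    @Q_indep _ _ _ _ _ _ q K (fun m : M => (m.1.2, m.2)) (fun s : S => (s.1.1, s.1.2)) (fun s : S => s.2) qd Kd k3.
  have Jx31 : condMI (jnt q K) jx a31 (fun _ => tt) = 0 :=
    @Q_indep _ _ _ _ _ _ q K (fun m : M => m.2) (fun s : S => s.1.1) (fun _ => tt) qd Kd (fun s s' _ => k31c s s').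
  have Jy23 : condMI (jnt q K) jy a23 (fun _ => tt) = 0 :=
    @Q_indep _ _ _ _ _ _ q K (fun m : M => m.1.2) (fun s : S => s.1.2) (fun _ => tt) qd Kd (fun s s' _ => k23c s s').
  have EP : entropy P a12 = entropy (jnt q K) a12 :=
    @ent_snd _ _ _ _ p q K (fun m : M => m.1.1) pd qd k12c.
  have RS : refines (jnt q K) (rvpair a12 (rvpair a23 a31)) (rvpair jx jy).
    apply: ref_pair; [apply: ref_trans R1 _ | apply: ref_trans R2 _]; [exact: (ref_fun (phi := fun v => (v.1, v.2.2))) (fun _ => erefl) | exact: (ref_fun (phi := fun v => (v.1, v.2.1))) (fun _ => erefl)].
  have RT1 : refines (jnt q K) (rvpair a23 a31) a31.
    by apply: (ref_fun (phi := fun v => v.2)).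
  have RV1 : refines (jnt q K) (rvpair a23 a31) a23.
    by apply: (ref_fun (phi := fun v => v.1)).
  have RTV1 : refines (jnt q K) (rvpair a23 a31) (rvpair a23 a31).
    by apply: (ref_fun (phi := fun v => v)).
  have RTV2 : refines (jnt q K) (rvpair a31 a23) (rvpair a23 a31).
    by apply: (ref_fun (phi := fun v => (v.2, v.1))).
  split.
  have K0 := @key _ _ _ _ _ _ _ _ _ (jnt q K) a12 a31 a23 (rvpair a23 a31) jx jz (rvpair jx jy) Q0 Q1 R1 R3 RS RT1 RV1 RTV1 I3 Jx31.
  have K1 : MI q (@sX X Y Z) (@sZ X Y Z) + condH q (rvpair (@sX X Y Z) (@sY X Y Z)) (@sZ X Y Z) <= entropy P a12.
    rewrite -(MI_fst q (@sX X Y Z) (@sZ X Y Z) Kd) -(condH_fst q (rvpair (@sX X Y Z) (@sY X Y Z)) (@sZ X Y Z) Kd) EP; exact: K0.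
  apply: le_trans K1; rewrite lerD2r; exact: RI_le.
  have K0 := @key _ _ _ _ _ _ _ _ _ (jnt q K) a12 a23 a31 (rvpair a23 a31) jy jz (rvpair jx jy) Q0 Q1 R2 R3 RS RV1 RT1 RTV2 I3 Jy23.
  have K1 : MI q (@sY X Y Z) (@sZ X Y Z) + condH q (rvpair (@sX X Y Z) (@sY X Y Z)) (@sZ X Y Z) <= entropy P a12.
    rewrite -(MI_fst q (@sY X Y Z) (@sZ X Y Z) Kd) -(condH_fst q (rvpair (@sX X Y Z) (@sY X Y Z)) (@sZ X Y Z) Kd) EP; exact: K0.
  apply: le_trans K1; rewrite lerD2r; exact: RI_le.
- have [Q0 Q1] := jnt_dist qd Kd.
  have R1 : refines (jnt q K) (rvpair a12 a31) jx := ref_Q qd cr1.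
  have R2 : refines (jnt q K) (rvpair a12 a23) jy := ref_Q qd cr2.
  have R3 : refines (jnt q K) (rvpair a23 a31) jz := ref_Q qd cr3.
  have I1 : condMI (jnt q K) (rvpair jy jz) (rvpair a12 a31) jx = 0 :=
    @Q_indep _ _ _ _ _ _ q K (fun m : M => (m.1.1, m.2)) (fun s : S => (s.1.2, s.2)) (fun s : S => s.1.1) qd Kd k1.
  have I2 : condMI (jnt q K) (rvpair jx jz) (rvpair a12 a23) jy = 0 :=
    @Q_indep _ _ _ _ _ _ q K (fun m : M => (m.1.1, m.1.2)) (fun s : S => (s.1.1, s.2)) (fun s : S => s.1.2) qd Kd k2.
  have I3 : condMI (jnt q K) (rvpair jx jy) (rvpair a23 a31) jz = 0 :=
    @Q_indep _ _ _ _ _ _ q K (fun m : M => (m.1.2, m.2)) (fun s : S => (s.1.1, s.1.2)) (fun s : S => s.2) qd Kd k3.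
  have Jz31 : condMI (jnt q K) jz a31 (fun _ => tt) = 0 :=
    @Q_indep _ _ _ _ _ _ q K (fun m : M => m.2) (fun s : S => s.2) (fun _ => tt) qd Kd (fun s s' _ => k31c s s').
  have Jy12 : condMI (jnt q K) jy a12 (fun _ => tt) = 0 :=
    @Q_indep _ _ _ _ _ _ q K (fun m : M => m.1.1) (fun s : S => s.1.2) (fun _ => tt) qd Kd (fun s s' _ => k12c s s').
  have EP : entropy P a23 = entropy (jnt q K) a23 :=
    @ent_snd _ _ _ _ p q K (fun m : M => m.1.2) pd qd k23c.
  have RS : refines (jnt q K) (rvpair a23 (rvpair a12 a31)) (rvpair jy jz).
    apply: ref_pair; [apply: ref_trans R2 _ | apply: ref_trans R3 _]; [exact: (ref_fun (phi := fun v => (v.2.1, v.1))) (fun _ => erefl) | exact: (ref_fun (phi := fun v => (v.1, v.2.2))) (fun _ => erefl)].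
  have RU : refines (jnt q K) (rvpair a23 a12) jy.
    apply: ref_trans R2 _; exact: (ref_fun (phi := fun v => (v.2, v.1))) (fun _ => erefl).
  have RA : refines (jnt q K) (rvpair a12 a31) a31.
    by apply: (ref_fun (phi := fun v => v.2)).
  have RB : refines (jnt q K) (rvpair a12 a31) a12.
    by apply: (ref_fun (phi := fun v => v.1)).
  have RTV1 : refines (jnt q K) (rvpair a12 a31) (rvpair a12 a31).
    by apply: (ref_fun (phi := fun v => v)).
  have RTV2 : refines (jnt q K) (rvpair a31 a12) (rvpair a12 a31).
    by apply: (ref_fun (phi := fun v => (v.2, v.1))).
  split.
  have K0 := @key _ _ _ _ _ _ _ _ _ (jnt q K) a23 a31 a12 (rvpair a12 a31) jz jx (rvpair jy jz) Q0 Q1 R3 R1 RS RA RB RTV1 I1 Jz31.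
  rewrite (MI_sym _ _ Q0) in K0.
  have K1 : MI q (@sX X Y Z) (@sZ X Y Z) + condH q (rvpair (@sY X Y Z) (@sZ X Y Z)) (@sX X Y Z) <= entropy P a23.
    rewrite -(MI_fst q (@sX X Y Z) (@sZ X Y Z) Kd) -(condH_fst q (rvpair (@sY X Y Z) (@sZ X Y Z)) (@sX X Y Z) Kd) EP; exact: K0.
  apply: le_trans K1; rewrite lerD2r; exact: RI_le.
  have K0 := @key _ _ _ _ _ _ _ _ _ (jnt q K) a23 a12 a31 (rvpair a12 a31) jy jx (rvpair jy jz) Q0 Q1 RU R1 RS RB RA RTV2 I1 Jy12.
  rewrite (MI_sym _ _ Q0) in K0.
  have K1 : MI q (@sX X Y Z) (@sY X Y Z) + condH q (rvpair (@sY X Y Z) (@sZ X Y Z)) (@sX X Y Z) <= entropy P a23.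
    rewrite -(MI_fst q (@sX X Y Z) (@sY X Y Z) Kd) -(condH_fst q (rvpair (@sY X Y Z) (@sZ X Y Z)) (@sX X Y Z) Kd) EP; exact: K0.
  apply: le_trans K1; rewrite lerD2r; exact: RI_le.
- have [Q0 Q1] := jnt_dist qd Kd.
  have R1 : refines (jnt q K) (rvpair a12 a31) jx := ref_Q qd cr1.
  have R2 : refines (jnt q K) (rvpair a12 a23) jy := ref_Q qd cr2.
  have R3 : refines (jnt q K) (rvpair a23 a31) jz := ref_Q qd cr3.
  have I1 : condMI (jnt q K) (rvpair jy jz) (rvpair a12 a31) jx = 0 :=
    @Q_indep _ _ _ _ _ _ q K (fun m : M => (m.1.1, m.2)) (fun s : S => (s.1.2, s.2)) (fun s : S => s.1.1) qd Kd k1.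
  have I2 : condMI (jnt q K) (rvpair jx jz) (rvpair a12 a23) jy = 0 :=
    @Q_indep _ _ _ _ _ _ q K (fun m : M => (m.1.1, m.1.2)) (fun s : S => (s.1.1, s.2)) (fun s : S => s.1.2) qd Kd k2.
  have I3 : condMI (jnt q K) (rvpair jx jy) (rvpair a23 a31) jz = 0 :=
    @Q_indep _ _ _ _ _ _ q K (fun m : M => (m.1.2, m.2)) (fun s : S => (s.1.1, s.1.2)) (fun s : S => s.2) qd Kd k3.
  have Jz23 : condMI (jnt q K) jz a23 (fun _ => tt) = 0 :=
    @Q_indep _ _ _ _ _ _ q K (fun m : M => m.1.2) (fun s : S => s.2) (fun _ => tt) qd Kd (fun s s' _ => k23c s s').
  have Jx12 : condMI (jnt q K) jx a12 (fun _ => tt) = 0 :=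
    @Q_indep _ _ _ _ _ _ q K (fun m : M => m.1.1) (fun s : S => s.1.1) (fun _ => tt) qd Kd (fun s s' _ => k12c s s').
  have EP : entropy P a31 = entropy (jnt q K) a31 :=
    @ent_snd _ _ _ _ p q K (fun m : M => m.2) pd qd k31c.
  have RS : refines (jnt q K) (rvpair a31 (rvpair a12 a23)) (rvpair jx jz).
    apply: ref_pair; [apply: ref_trans R1 _ | apply: ref_trans R3 _]; [exact: (ref_fun (phi := fun v => (v.2.1, v.1))) (fun _ => erefl) | exact: (ref_fun (phi := fun v => (v.2.2, v.1))) (fun _ => erefl)].
  have RUz : refines (jnt q K) (rvpair a31 a23) jz.
    apply: ref_trans R3 _; exact: (ref_fun (phi := fun v => (v.2, v.1))) (fun _ => erefl).
  have RUx : refines (jnt q K) (rvpair a31 a12) jx.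
    apply: ref_trans R1 _; exact: (ref_fun (phi := fun v => (v.2, v.1))) (fun _ => erefl).
  have RA : refines (jnt q K) (rvpair a12 a23) a23.
    by apply: (ref_fun (phi := fun v => v.2)).
  have RB : refines (jnt q K) (rvpair a12 a23) a12.
    by apply: (ref_fun (phi := fun v => v.1)).
  have RTV1 : refines (jnt q K) (rvpair a12 a23) (rvpair a12 a23).
    by apply: (ref_fun (phi := fun v => v)).
  have RTV2 : refines (jnt q K) (rvpair a23 a12) (rvpair a12 a23).
    by apply: (ref_fun (phi := fun v => (v.2, v.1))).
  split.
  have K0 := @key _ _ _ _ _ _ _ _ _ (jnt q K) a31 a23 a12 (rvpair a12 a23) jz jy (rvpair jx jz) Q0 Q1 RUz R2 RS RA RB RTV1 I2 Jz23.
  rewrite (MI_sym _ _ Q0) in K0.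
  have K1 : MI q (@sY X Y Z) (@sZ X Y Z) + condH q (rvpair (@sX X Y Z) (@sZ X Y Z)) (@sY X Y Z) <= entropy P a31.
    rewrite -(MI_fst q (@sY X Y Z) (@sZ X Y Z) Kd) -(condH_fst q (rvpair (@sX X Y Z) (@sZ X Y Z)) (@sY X Y Z) Kd) EP; exact: K0.
  apply: le_trans K1; rewrite lerD2r; exact: RI_le.
  have K0 := @key _ _ _ _ _ _ _ _ _ (jnt q K) a31 a12 a23 (rvpair a12 a23) jx jy (rvpair jx jz) Q0 Q1 RUx R2 RS RB RA RTV2 I2 Jx12.
  have K1 : MI q (@sX X Y Z) (@sY X Y Z) + condH q (rvpair (@sX X Y Z) (@sZ X Y Z)) (@sY X Y Z) <= entropy P a31.
    rewrite -(MI_fst q (@sX X Y Z) (@sY X Y Z) Kd) -(condH_fst q (rvpair (@sX X Y Z) (@sZ X Y Z)) (@sY X Y Z) Kd) EP; exact: K0.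
  apply: le_trans K1; rewrite lerD2r; exact: RI_le.
Qed.
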